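(* There exists an atomic Puiseux monoid $M$ such that (1) $M \subseteq \mathbb{Z}\big[\tfrac{1}{2}, \tfrac{1}{3}\big]$, and (2) $\tfrac{1}{2^n} \in M$ for every $n \in \mathbb{N}_0$.
   Context: A Puiseux monoid is a submonoid of $(\mathbb{Q}_{\ge 0}, +)$. An atom of a monoid $M$ is a nonzero element $a$ (in a Puiseux monoid the only invertible element is $0$) such that $a = x+y$ with $x,y\in M$ implies $x = 0$ or $y = 0$; $M$ is atomic if every nonzero element is a finite sum of atoms. $\mathbb{N}_0 = \{0,1,2,\dots\}$. *)

(* Defs.v *)
From mathcomp Require Import all_boot all_order all_algebra.
Set Implicit Arguments. Unset Strict Implicit. Unset Printing Implicit Defensive.
Import Order.TTheory GRing.Theory Num.Theory.
Local Open Scope ring_scope.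

Definition puiseux_monoid (M : rat -> Prop) : Prop :=
  (forall x, M x -> 0 <= x) /\ M 0 /\ (forall x y, M x -> M y -> M (x + y)).

Definition atom (M : rat -> Prop) (a : rat) : Prop :=
  M a /\ a != 0 /\ (forall x y, M x -> M y -> a = x + y -> x = 0 \/ y = 0).

Definition atomic (M : rat -> Prop) : Prop :=
  forall x, M x -> x != 0 ->
    exists s : seq rat, (forall a, a \in s -> atom M a) /\ x = \sum_(a <- s) a.

Definition in_Z_half_third (q : rat) : Prop :=
  exists (z : int) (m n : nat), q = z%:~R / (2 ^+ m * 3 ^+ n).

(* Main.v *)
Require Import Defs.
From mathcomp Require Import all_boot all_order all_algebra ring lra zify.
Import Order.TTheory GRing.Theory Num.Theory.
Local Open Scope ring_scope.

Definition u (n : nat) : rat := (2 ^+ n)^-1.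
Definition e (n : nat) : rat := (9 ^+ n.+2)^-1.

Lemma u_gt0 n : 0 < u n.
Proof. by rewrite /u invr_gt0 exprn_gt0. Qed.
Lemma e_gt0 n : 0 < e n.
Proof. by rewrite /e invr_gt0 exprn_gt0. Qed.

Lemma pow29 k : (2 : rat) ^+ k <= 9 ^+ k.
Proof.
elim: k => [|k IH]; first by rewrite !expr0.
by rewrite !exprS; apply: ler_pM => //; rewrite exprn_ge0.
Qed.

Lemma e_le n : 81 * e n <= u n.
Proof.
rewrite /e /u.
have -> : (9 : rat) ^+ n.+2 = 81 * 9 ^+ n by rewrite !exprS mulrA.
rewrite invfM mulrA mulfV // mul1r lef_pV2 ?posrE ?exprn_gt0 //.
exact: pow29.
Qed.

Lemma u_add a b : u (a + b) = u a * u b.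
Proof. by rewrite /u exprD invfM. Qed.

Lemma u_lt m k : 2 * u (m + k.+1) <= u m.
Proof.
rewrite u_add.
have h1 : u k.+1 <= 1/2.
  rewrite /u exprS invfM; have := u_gt0 k; rewrite /u => h.
  have : (2^+k : rat)^-1 <= 1.
    rewrite invf_le1 ?exprn_gt0 // exprn_ege1 //.
  lra.
have := ler_wpM2l (ltW (u_gt0 m)) h1; lra.
Qed.

Lemma e_u n k : e (n + k.+1) * u n * 9 <= 2 * e n * u (n + k.+1).
Proof.
have he : e (n + k.+1) = e n * (9 ^+ k.+1)^-1.
  by rewrite /e -invfM -exprD !addSn.
rewrite he u_add.
set E := e n; set U := u n.
have hE : 0 < E by exact: e_gt0.
have hU : 0 < U by exact: u_gt0.
have h : 9 * (9 ^+ k.+1 : rat)^-1 <= 2 * u k.+1.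
  rewrite /u !exprS !invfM mulrA mulfV // mul1r mulrA mulfV // mul1r.
  by rewrite lef_pV2 ?posrE ?exprn_gt0 // pow29.
have := mulr_gt0 hE hU => hEU.
have := ler_wpM2l (ltW hEU) h.
move=> h2; rewrite -[X in X <= _]mulrA -[X in X <= _]mulrA. 
have -> : E * ((9 ^+ k.+1)^-1 * (U * 9)) = E * U * (9 * (9 ^+ k.+1)^-1) by ring.
have -> : 2 * E * (U * u k.+1) = E * U * (2 * u k.+1) by ring.
exact: h2.
Qed.

Definition g (c : nat * bool) : rat :=
  if c.2 then 3/8 * u c.1 + 2 * e c.1 else 5/16 * u c.1 - e c.1.
Definition t (c : nat * bool) : rat := if c.2 then 2 * e c.1 else - e c.1.
Definition d (c : nat * bool) : rat := if c.2 then 3/8 * u c.1 else 5/16 * u c.1.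
Definition kap (c : nat * bool) : rat := if c.2 then 4 else 2.

Lemma g_dt c : g c = d c + t c.
Proof. by rewrite /g /d /t; case: c.2. Qed.

Lemma g_bounds c : (3/10) * u c.1 <= g c <= (2/5) * u c.1.
Proof.
have := e_le c.1; have := e_gt0 c.1; have := u_gt0 c.1.
rewrite /g; case: c.2 => *; apply/andP; split; lra.
Qed.

Lemma g_gt0 c : 0 < g c.
Proof. have := g_bounds c; have := u_gt0 c.1 => ? /andP[] *; lra. Qed.

Ltac revert_rat := repeat match goal with
  | H : is_true (@Order.le _ _ _ _) |- _ => revert H
  | H : is_true (@Order.lt _ _ _ _) |- _ => revert H end.

Lemma bound c c0 : g c < g c0 -> `|t c| * u c0.1 <= kap c0 * e c0.1 * g c.
Proof.
case: c c0 => m b [n b0] /= hlt.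
have hm := e_le m; have hn := e_le n.
have hum := u_gt0 m; have hun := u_gt0 n; have hem := e_gt0 m; have hen := e_gt0 n.
have ht : `|t (m, b)| = if b then 2 * e m else e m.
  rewrite /t /=; case: (b).
    by rewrite ger0_norm; last lra.
  by rewrite normrN gtr0_norm.
rewrite ht; clear ht.
case: (ltngtP m n) => hmn.
-
  exfalso; move: hlt.
  have [k hk] : exists k, n = (m + k.+1)%N by exists (n - m.+1)%N; lia.
  have h1 := u_lt m k; rewrite -hk in h1; clear hk hmn.
  rewrite /g /=; case: (b); case: (b0) => /= H; revert_rat; move: (u m) (u n) (e m) (e n) => a1 a2 a3 a4; intros; lra.
-
  have [k hk] : exists k, m = (n + k.+1)%N by exists (m - n.+1)%N; lia.
  have F := e_u n k; rewrite -hk in F; clear hk hmn.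
  have R1 : e n * e m <= e n * (u m / 81).
    apply: ler_wpM2l; [exact: ltW| lra].
  have P1 := mulr_gt0 hen hem.
  rewrite /g /kap /=; case: (b); case: (b0) => /=; revert_rat; move: (u m) (u n) (e m) (e n) => a1 a2 a3 a4; intros; lra.
- subst m.
  have P1 := mulr_gt0 hen hen.
  have R1 : e n * e n <= e n * (u n / 81).
    apply: ler_wpM2l; [exact: ltW| lra].
  move: hlt; rewrite /g /kap /=; case: (b); case: (b0) => /= H;
  revert_rat; move: (u n) (e n) => a2 a4; intros; lra.
Qed.

Lemma final c0 : kap c0 * e c0.1 * g c0 < `|t c0| * u c0.1.
Proof.
case: c0 => n b /=.
have hn := e_le n; have hun := u_gt0 n; have hen := e_gt0 n.
have P1 := mulr_gt0 hen hen.
have R1 : e n * e n <= e n * (u n / 81).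
  apply: ler_wpM2l; [exact: ltW| lra].
rewrite /t /g /kap /=; case: (b) => /=.
  rewrite ger0_norm; last lra.
  revert_rat; move: (u n) (e n) => a2 a4; intros; lra.
rewrite normrN gtr0_norm; last exact: hen.
revert_rat; move: (u n) (e n) => a2 a4; intros; lra.
Qed.
Lemma cop j i : coprimez (2 ^+ j) (3 ^+ i).
Proof. rewrite /coprimez /gcdz !abszX; apply: coprimeXl; apply: coprimeXr; by []. Qed.

Lemma intrX' (a : int) j : ((a ^+ j)%:~R : rat) = a%:~R ^+ j.
Proof. by rewrite rmorphXn. Qed.

Definition dy (x : rat) := exists (z : int) (j : nat), x = z%:~R / 2 ^+ j.
Definition tr (x : rat) := exists (z : int) (j : nat), x = z%:~R / 3 ^+ j.

Lemma dy_tr x : dy x -> tr x -> exists k : int, x = k%:~R.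
Proof.
move=> [z [j ->]] [w [i /eqP]].
have h2 : (2 ^+ j : rat) != 0 by rewrite expf_neq0.
have h3 : (3 ^+ i : rat) != 0 by rewrite expf_neq0.
have e2 : (2 ^+ j : rat) = (2 ^+ j : int)%:~R by rewrite intrX'.
have e3 : (3 ^+ i : rat) = (3 ^+ i : int)%:~R by rewrite intrX'.
rewrite eqr_div // e2 e3 -!intrM eqr_int => /eqP E.
have : (2 ^+ j %| z * 3 ^+ i)%Z by rewrite E dvdz_mull.
rewrite Gauss_dvdzl ?cop // => /dvdzP [q ->].
exists q; rewrite intrM -e2 mulfK //.
Qed.

Lemma dyD x y : dy x -> dy y -> dy (x + y).
Proof.
move=> [z1 [j1 ->]] [z2 [j2 ->]].
exists (z1 * 2 ^+ j2 + z2 * 2 ^+ j1), (j1 + j2)%N.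
have h1 : (2 ^+ j1 : rat) != 0 by rewrite expf_neq0.
have h2 : (2 ^+ j2 : rat) != 0 by rewrite expf_neq0.
rewrite intrD !intrM !intrX' exprD; field; by apply/andP.
Qed.

Lemma trD x y : tr x -> tr y -> tr (x + y).
Proof.
move=> [z1 [j1 ->]] [z2 [j2 ->]].
exists (z1 * 3 ^+ j2 + z2 * 3 ^+ j1), (j1 + j2)%N.
have h1 : (3 ^+ j1 : rat) != 0 by rewrite expf_neq0.
have h2 : (3 ^+ j2 : rat) != 0 by rewrite expf_neq0.
rewrite intrD !intrM !intrX' exprD; field; by apply/andP.
Qed.

Lemma dyN x : dy x -> dy (- x).
Proof. move=> [z [j ->]]; exists (- z), j; by rewrite intrN mulNr. Qed.
Lemma trN x : tr x -> tr (- x).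
Proof. move=> [z [j ->]]; exists (- z), j; by rewrite intrN mulNr. Qed.

Lemma dy_d c : dy (d c).
Proof.
rewrite /d /u; case: (c.2).
  exists 3, (c.1 + 3)%N; rewrite exprD.
  have h1 : (2 ^+ c.1 : rat) != 0 by rewrite expf_neq0.
  have -> : (2 : rat) ^+ 3 = 8 by rewrite !exprS expr0; lra.
  have -> : ((3 : int)%:~R : rat) = 3 by [].
  field; exact: h1.
exists 5, (c.1 + 4)%N; rewrite exprD.
have h1 : (2 ^+ c.1 : rat) != 0 by rewrite expf_neq0.
have -> : (2 : rat) ^+ 4 = 16 by rewrite !exprS expr0; lra.
have -> : ((5 : int)%:~R : rat) = 5 by [].
field; exact: h1.
Qed.

Lemma nine n : (9 : rat) ^+ n = 3 ^+ (2 * n).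
Proof. by rewrite exprM; congr (_ ^+ _); rewrite expr2; lra. Qed.

Lemma tr_t c : tr (t c).
Proof.
have h : tr (e c.1).
  exists 1, (2 * c.1.+2)%N; by rewrite /e nine div1r.
rewrite /t; case: (c.2).
  have -> : 2 * e c.1 = e c.1 + e c.1 by lra.
  exact: trD.
exact: trN.
Qed.

Lemma dy_sum (s : seq (nat * bool)) : dy (\sum_(c <- s) d c).
Proof.
elim: s => [|c s IH]; first by rewrite big_nil; exists 0, 0%N; rewrite mul0r.
by rewrite big_cons; apply: dyD => //; exact: dy_d.
Qed.

Lemma tr_sum (s : seq (nat * bool)) : tr (\sum_(c <- s) t c).
Proof.
elim: s => [|c s IH]; first by rewrite big_nil; exists 0, 0%N; rewrite mul0r.
by rewrite big_cons; apply: trD => //; exact: tr_t.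
Qed.

Lemma sum_t_bound c0 (s : seq (nat * bool)) :
  (forall c, c \in s -> g c < g c0) ->
  `|\sum_(c <- s) t c| * u c0.1 <= kap c0 * e c0.1 * \sum_(c <- s) g c.
Proof.
elim: s => [|c s IH] H; first by rewrite !big_nil normr0 mul0r mulr0.
rewrite !big_cons.
have h1 := bound c c0 (H c (mem_head c s)).
have h2 : `|\sum_(c <- s) t c| * u c0.1 <= kap c0 * e c0.1 * \sum_(c <- s) g c.
  by apply: IH => c' hc'; apply: H; rewrite in_cons hc' orbT.
have h3 := ler_normD (t c) (\sum_(c <- s) t c).
have hu := u_gt0 c0.1.
have h4 := ler_wpM2r (ltW hu) h3.
move: h1 h2 h4 hu.
move: (`|t c|) (`|\sum_(c <- s) t c|) (`|t c + \sum_(c <- s) t c|) (u c0.1) (kap c0 * e c0.1) (g c) (\sum_(c <- s) g c) => a b x y z w v.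
move=> *; nra.
Qed.

Lemma key c0 (s : seq (nat * bool)) :
  (forall c, c \in s -> g c < g c0) -> \sum_(c <- s) g c <> g c0.
Proof.
move=> H E.
have B := sum_t_bound c0 s H; rewrite E in B.
have F := final c0.
have hu := u_gt0 c0.1.
have lt : `|\sum_(c <- s) t c| < `|t c0|.
  rewrite -(ltr_pM2r hu); exact: le_lt_trans B F.
have Eg : \sum_(c <- s) g c = \sum_(c <- s) d c + \sum_(c <- s) t c.
  by rewrite -big_split /=; apply: eq_bigr => c _; rewrite g_dt.
have [k hk] : exists k : int, \sum_(c <- s) d c - d c0 = k%:~R.
  apply: dy_tr; first by apply: dyD; [exact: dy_sum| apply: dyN; exact: dy_d].
  have -> : \sum_(c <- s) d c - d c0 = t c0 - \sum_(c <- s) t c.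
    move: E; rewrite Eg g_dt.
    move: (\sum_(c <- s) d c) (\sum_(c <- s) t c) (d c0) (t c0) => a b x y; lra.
  apply: trD; [exact: tr_t| apply: trN; exact: tr_sum].
have ht0 : `|t c0| <= 2/81.
  have : u c0.1 <= 1 by rewrite /u invf_le1 ?exprn_gt0 // exprn_ege1.
  have := e_le c0.1; have := e_gt0 c0.1; rewrite /t; case: (c0.2) => *.
    rewrite ger0_norm; last lra. lra.
  rewrite normrN gtr0_norm; last lra. lra.
have hk2 : t c0 - \sum_(c <- s) t c = k%:~R by rewrite -hk; move: E; rewrite Eg g_dt;
  move: (\sum_(c <- s) d c) (\sum_(c <- s) t c) (d c0) (t c0) => a b x y; lra.
have hk3 : `|k%:~R : rat| < 1.
  rewrite -hk2.
  have := ler_normB (t c0) (\sum_(c <- s) t c).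
  move: lt ht0; move: (`|t c0|) (`|\sum_(c <- s) t c|) (`|t c0 - \sum_(c <- s) t c|) => a b x; lra.
have k0 : k = 0.
  apply/eqP; apply: contraTT hk3 => hk0.
  rewrite -intr_norm -leNgt ler1z.
  by rewrite -gtz0_ge1 normr_gt0.
have E2 : t c0 = \sum_(c <- s) t c by apply/eqP; rewrite -subr_eq0 hk2 k0.
by move: lt; rewrite -E2 ltxx.
Qed.

Definition Mset (x : rat) : Prop := exists s : seq (nat * bool), x = \sum_(c <- s) g c.

Lemma sum_ge0 (s : seq (nat * bool)) : 0 <= \sum_(c <- s) g c.
Proof.
elim: s => [|c s IH]; first by rewrite big_nil.
rewrite big_cons; have := g_gt0 c; move: IH; move: (g c) (\sum_(c <- s) g c) => a b; lra.
Qed.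

Lemma mem_le (s : seq (nat * bool)) c : c \in s -> g c <= \sum_(c <- s) g c.
Proof.
elim: s => [|c' s IH]; first by rewrite in_nil.
rewrite in_cons big_cons => /orP [/eqP ->|hc].
  have := sum_ge0 s; move: (g c') (\sum_(c <- s) g c) => a b; lra.
have := IH hc; have := g_gt0 c'.
move: (g c') (g c) (\sum_(c <- s) g c) => a b x; lra.
Qed.

Lemma is_atom c0 : atom Mset (g c0).
Proof.
split; first by exists [:: c0]; rewrite big_seq1.
split; first by rewrite gt_eqF // g_gt0.
move=> x y [s1 ->] [s2 ->] E.
have h1 := sum_ge0 s1; have h2 := sum_ge0 s2.
case: (eqVneq (\sum_(c <- s1) g c) 0) => [-> | n1]; first by left.
case: (eqVneq (\sum_(c <- s2) g c) 0) => [-> | n2]; first by right.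
exfalso.
have p1 : 0 < \sum_(c <- s1) g c by rewrite lt_neqAle eq_sym n1 h1.
have p2 : 0 < \sum_(c <- s2) g c by rewrite lt_neqAle eq_sym n2 h2.
apply: (key c0 (s1 ++ s2)); last by rewrite E big_cat.
move=> c; rewrite mem_cat => /orP [hc|hc].
  have := mem_le s1 c hc; move: p2 E; move: (g c) (g c0) (\sum_(c <- s1) g c) (\sum_(c <- s2) g c) => a b x1 z1; lra.
have := mem_le s2 c hc; move: p1 E; move: (g c) (g c0) (\sum_(c <- s1) g c) (\sum_(c <- s2) g c) => a b x1 z1; lra.
Qed.

Lemma inZ_add x y : in_Z_half_third x -> in_Z_half_third y -> in_Z_half_third (x + y).
Proof.
move=> [z1 [m1 [n1 ->]]] [z2 [m2 [n2 ->]]].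
exists (z1 * 2 ^+ m2 * 3 ^+ n2 + z2 * 2 ^+ m1 * 3 ^+ n1), (m1 + m2)%N, (n1 + n2)%N.
have a1 : (2 ^+ m1 : rat) != 0 by rewrite expf_neq0.
have a2 : (2 ^+ m2 : rat) != 0 by rewrite expf_neq0.
have b1 : (3 ^+ n1 : rat) != 0 by rewrite expf_neq0.
have b2 : (3 ^+ n2 : rat) != 0 by rewrite expf_neq0.
rewrite intrD !intrM !intrX' !exprD; field.
by rewrite a1 a2 b1 b2.
Qed.

Lemma inZ_dy x : dy x -> in_Z_half_third x.
Proof. move=> [z [j ->]]; exists z, j, 0%N; by rewrite expr0 mulr1. Qed.
Lemma inZ_tr x : tr x -> in_Z_half_third x.
Proof. move=> [z [j ->]]; exists z, 0%N, j; by rewrite expr0 mul1r. Qed.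

Lemma inZ_M x : Mset x -> in_Z_half_third x.
Proof.
move=> [s ->].
have -> : \sum_(c <- s) g c = \sum_(c <- s) d c + \sum_(c <- s) t c.
  by rewrite -big_split /=; apply: eq_bigr => c _; rewrite g_dt.
apply: inZ_add; [apply: inZ_dy; exact: dy_sum| apply: inZ_tr; exact: tr_sum].
Qed.

Theorem proposition5p1 :
  exists M : rat -> Prop,
    [/\ puiseux_monoid M, atomic M,
        (forall x, M x -> in_Z_half_third x) &
        (forall n : nat, M (1 / 2 ^+ n))].
Proof.
exists Mset; split.
- split; first by move=> x [s ->]; exact: sum_ge0.
  split; first by exists [::]; rewrite big_nil.
  by move=> x y [s1 ->] [s2 ->]; exists (s1 ++ s2); rewrite big_cat.
- move=> x [s ->] _; exists (map g s); split; last by rewrite big_map.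
  by move=> a /mapP [c _ ->]; exact: is_atom.
- exact: inZ_M.
- move=> n; exists [:: (n, true); (n, false); (n, false)].
  rewrite !big_cons big_nil /g /= div1r -/(u n).
  move: (u n) (e n) => a b; lra.
Qed.
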